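(* Let $R \subseteq T$ be commutative rings and let $I$ be an ideal of $R$ with $IT = I$ (so $I$ is also an ideal of $T$). Let $W$ be a multiplicatively closed subset of $T$, put $V = W \cap R$, and suppose $I \cap W \neq \emptyset$. Then the natural map $R_V \to T_W$ is an isomorphism. *)

(* Defs.v *)
From mathcomp Require Import all_boot all_algebra.
Set Implicit Arguments. Unset Strict Implicit. Unset Printing Implicit Defensive.
Import GRing.Theory.
Local Open Scope ring_scope.

Definition is_ideal (A : comPzRingType) (I : A -> Prop) : Prop :=
  [/\ I 0, (forall x y, I x -> I y -> I (x + y)) & (forall a x, I x -> I (a * x))].

Definition mult_closed (A : comPzRingType) (S : A -> Prop) : Prop :=
  S 1 /\ (forall x y, S x -> S y -> S (x * y)).

Definition ext_ideal (R T : comPzRingType) (f : R -> T) (I : R -> Prop) (t : T) : Prop :=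
  exists s : seq (R * T), (forall p, p \in s -> I p.1) /\ t = \sum_(p <- s) f p.1 * p.2.

(* Equality of fractions a/s = a'/s' in the localization S^{-1} A. *)
Definition loc_eq (A : comPzRingType) (S : A -> Prop) (a s a' s' : A) : Prop :=
  exists u, S u /\ u * (a * s' - a' * s) = 0.

(* The natural map V^{-1} R -> W^{-1} T, r/v |-> f(r)/f(v), is bijective
   (it is well defined and a ring map whenever f(V) ⊆ W). *)
Definition natural_loc_map_bijective (R T : comPzRingType) (f : R -> T)
    (V : R -> Prop) (W : T -> Prop) : Prop :=
  (forall r v r' v', V v -> V v' ->
      loc_eq W (f r) (f v) (f r') (f v') -> loc_eq V r v r' v')
  /\ (forall t w, W w -> exists r v, V v /\ loc_eq W t w (f r) (f v)).

(* Main.v *)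
Require Import Defs.
From mathcomp Require Import all_boot all_algebra.
Local Open Scope ring_scope.
Import GRing.Theory.

Theorem lemma4p4 (R T : comPzRingType) (f : {rmorphism R -> T})
    (I : R -> Prop) (W : T -> Prop) :
  injective f ->
  is_ideal I ->
  (forall t : T, ext_ideal f I t <-> exists i, I i /\ f i = t) ->
  mult_closed W ->
  (exists i, I i /\ W (f i)) ->
  natural_loc_map_bijective f (fun r => W (f r)) W.
Proof.
move=> finj _ hext [W1 WM] [i0 [Ii0 Wi0]].
have key : forall t : T, exists r, f r = f i0 * t.
  move=> t; have [|r [_ hr]] := (hext (f i0 * t)).1; last by exists r.
  exists [:: (i0, t)]; split.
    by move=> p; rewrite inE => /eqP ->.
  by rewrite big_seq1.
split.
  move=> r v r' v' Vv Vv' [u [Wu hu]].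
  have [u' hu'] := key u.
  exists u'; split; first by rewrite hu'; exact: WM.
  apply: finj; rewrite rmorph0 rmorphM rmorphB !rmorphM hu'.
  by rewrite -mulrA hu mulr0.
move=> t w Ww.
have [r hr] := key t; have [v hv] := key w.
exists r, v; split; first by rewrite hv; exact: WM.
exists 1; split => //.
by rewrite hr hv mul1r mulrCA -(mulrA (f i0) t w) (mulrC t w) subrr.
Qed.
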